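(* For $n\ge 1$, let $\Delta_n$ be the $n$-dimensional simplex and $C^*_n$ the $n$-dimensional cross-polytope. Then $$\Theta(\Psi(\Delta_n))=[n+1]!\qquad\text{and}\qquad \Theta(\Psi(C^*_n))=[2]^n\cdot[n]!.$$
   Context: For a polytope $V$, $\Psi(V)$ denotes the $\mathbf{a}\mathbf{b}$-index of its face lattice (all faces, including the empty face and $V$ itself, ordered by inclusion; a graded poset of rank $\dim V+1$). The $\mathbf{a}\mathbf{b}$-index of a graded poset $P$ of rank $n+1$ with minimum $\hat 0$, maximum $\hat 1$ and rank function $\rho$ is $\Psi(P)=\sum_{S\subseteq\{1,\dots,n\}} f_S\, v_S$, where for $S=\{s_1<\cdots<s_k\}$, $f_S$ is the number of chains $\hat0<x_1<\cdots<x_k<\hat1$ with $\rho(x_i)=s_i$, and $v_S=v_1\cdots v_n$ with $v_i=\mathbf{b}$ if $i\in S$ and $v_i=\mathbf{a}-\mathbf{b}$ if $i\notin S$; here $\mathbf{a},\mathbf{b}$ are non-commuting variables. The Major MacMahon map $\Theta:\mathbb{Z}\langle\mathbf{a},\mathbf{b}\rangle\to\mathbb{Z}[q]$ is the linear map with $\Theta(u_1\cdots u_n)=\prod_{i:\,u_i=\mathbf{b}}q^i$ on monomials. $[m]=1+q+\cdots+q^{m-1}$ and $[m]!=[m][m-1]\cdots[1]$. *)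

(* Defs.v *)
From HB Require Import structures.
From mathcomp Require Import all_boot all_order all_algebra.
Set Implicit Arguments. Unset Strict Implicit. Unset Printing Implicit Defensive.
Import Order.TTheory GRing.Theory Num.Theory.
Local Open Scope ring_scope.

(* A homogeneous element of Z<a,b> of degree n, given by the coefficients of
   its monomials u_1 ... u_n; a monomial is an n-tuple of booleans where
   [true] stands for the letter b and [false] for the letter a. *)
Definition abpoly (n : nat) := {ffun n.-tuple bool -> int}.

(* The monomial v_S = v_1 ... v_n with v_i = b if i in S, v_i = a - b
   otherwise, expanded: the coefficient of the word w in the product
   v_1 ... v_n is the product of the coefficients of w_i in v_i.
   Positions are 0-indexed here: i : 'I_n stands for position i+1. *)
Definition coef_letter (inS : bool) (letter : bool) : int :=
  if inS then (if letter then 1 else 0)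
  else (if letter then -1 else 1).

Definition vS (n : nat) (S : {set 'I_n}) : abpoly n :=
  [ffun w : n.-tuple bool => \prod_(i < n) coef_letter (i \in S) (tnth w i)].

(* For S a subset of {1..n} (encoded as S : {set 'I_n}, i standing for i+1),
   f_S is the number of chains bot < x_1 < ... < x_k < top with
   rk x_j = s_j, where s_1 < ... < s_k are the elements of S. *)
Definition flag_number (T : finType) (lt : rel T) (rk : T -> nat) (bot top : T)
    (n : nat) (S : {set 'I_n}) : nat :=
  #|[pred t : (#|S|).-tuple T |
       path lt bot (rcons (val t) top) &&
       (map rk (val t) == [seq (val i).+1 | i <- enum S])]|.

Definition abindex (T : finType) (lt : rel T) (rk : T -> nat) (bot top : T)
    (n : nat) : abpoly n :=
  [ffun w => \sum_(S : {set 'I_n})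
               (flag_number lt rk bot top S)%:Z * vS S w].

Definition Theta (n : nat) (p : abpoly n) : {poly int} :=
  \sum_(w : n.-tuple bool) p w *: \prod_(i < n | tnth w i) 'X^(i.+1).

Definition qint (m : nat) : {poly int} := \sum_(i < m) 'X^i.
Definition qfact (m : nat) : {poly int} := \prod_(1 <= k < m.+1) qint k.

(* Faces of Delta_n = subsets of its n+1 vertices (empty face and Delta_n
   included), ordered by inclusion; rank = dim + 1 = number of vertices. *)
Definition simplex_lt (n : nat) : rel {set 'I_n.+1} := fun A B => A \proper B.
Definition simplex_rank (n : nat) (A : {set 'I_n.+1}) : nat := #|A|.

Definition Psi_simplex (n : nat) : abpoly n :=
  abindex (@simplex_lt n) (@simplex_rank n) set0 setT n.

(* Vertices of C*_n are +-e_i, encoded as (i, sign) : 'I_n * bool.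
   Proper faces (including the empty face) = vertex sets containing no
   antipodal pair; ordered by inclusion; rank = number of vertices.
   The polytope itself is the extra top element (None), of rank n+1. *)
Definition cross_valid (n : nat) (A : {set 'I_n * bool}) : bool :=
  [forall i : 'I_n, ~~ (((i, true) \in A) && ((i, false) \in A))].

Definition cross_face (n : nat) := option {A : {set 'I_n * bool} | cross_valid A}.

Definition cross_lt (n : nat) : rel (cross_face n) := fun x y =>
  match x, y with
  | Some A, Some B => val A \proper val B
  | Some _, None => true
  | None, _ => false
  end.

Definition cross_rank (n : nat) (x : cross_face n) : nat :=
  match x with Some A => #|val A| | None => n.+1 end.

Lemma cross_valid0 (n : nat) : cross_valid (set0 : {set 'I_n * bool}).
Proof. by apply/forallP => i; rewrite !inE. Qed.

Definition cross_bot (n : nat) : cross_face n := Some (exist _ set0 (cross_valid0 n)).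

Definition Psi_cross (n : nat) : abpoly n :=
  abindex (@cross_lt n) (@cross_rank n) (cross_bot n) None n.

(* Main.v *)
Require Import Defs.
From HB Require Import structures.
From mathcomp Require Import all_boot all_order all_algebra.
From mathcomp Require Import zify ring.
Import GRing.Theory.
Local Open Scope ring_scope.

Set Implicit Arguments. Unset Strict Implicit. Unset Printing Implicit Defensive.

Section Generic.
Variables (T : finType) (lt : rel T) (rk : T -> nat) (bot : T) (n : nat).

Definition cS (S : {set 'I_n}) (i : 'I_n) : {poly int} :=
  if i \in S then 'X^(i.+1) else 1 - 'X^(i.+1).

Lemma ThetavS (S : {set 'I_n}) :
  \sum_(w : n.-tuple bool) vS S w *: \prod_(i < n | tnth w i) 'X^(i.+1)
  = \prod_(i < n) cS S i.
Proof.
have -> : \prod_(i < n) cS S i = \prod_(i < n) \sum_(b : bool)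
    ((coef_letter (i \in S) b)%:P * (if b then 'X^(i.+1) else 1)).
  apply: eq_bigr => i _; rewrite big_bool /= /cS /coef_letter.
  case: (i \in S) => /=; first by rewrite polyC1 polyC0 mul1r mul0r addr0.
  by rewrite polyCN polyC1 mulN1r mulr1 addrC.
rewrite bigA_distr_bigA /=.
rewrite (reindex (fun g : {ffun 'I_n -> bool} => [tuple g i | i < n])) /=; last first.
  exists (fun w : n.-tuple bool => [ffun i => tnth w i]) => g _.
    by apply/ffunP => i; rewrite ffunE tnth_mktuple.
  by apply: eq_from_tnth => i; rewrite tnth_mktuple ffunE.
apply: eq_bigr => g _.
rewrite /vS ffunE -mul_polyC rmorph_prod [X in _ * X]big_mkcond -big_split /=.
by apply: eq_bigr => i _; rewrite !tnth_mktuple.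
Qed.

Lemma ThetaE (top : T) :
  Theta (abindex lt rk bot top n) =
  \sum_(S : {set 'I_n}) (flag_number lt rk bot top S)%:R * \prod_(i < n) cS S i.
Proof.
rewrite /Theta.
under eq_bigr => w _ do rewrite ffunE scaler_suml.
rewrite exchange_big /=; apply: eq_bigr => S _.
rewrite -ThetavS mulr_sumr; apply: eq_bigr => w _.
by rewrite -scalerA -[Posz _]natz scaler_nat mulr_natl.
Qed.
End Generic.

Section Cnt.
Variables (T : finType) (lt : rel T) (rk : T -> nat) (bot : T).

Definition cnt k x (r : seq nat) : nat :=
  #|[pred t : k.-tuple T | path lt bot (rcons t x) && (map rk t == r)]|.

Lemma tuple_lastI k (u : k.+1.-tuple T) :
  val u = rcons (belast (thead u) (behead u)) (last (thead u) (behead u)).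
Proof. by rewrite -lastI {1}(tuple_eta u). Qed.

Lemma cnt_rcons k x r a :
  cnt k.+1 x (rcons r a) = (\sum_(z | lt z x && (rk z == a)) cnt k z r)%N.
Proof.
rewrite /cnt -sum1_card.
rewrite (reindex (fun p : k.-tuple T * T => [tuple of rcons p.1 p.2])) /=; last first.
  exists (fun t : k.+1.-tuple T =>
            ([tuple of belast (thead t) (behead t)], last (thead t) (behead t))).
    move=> [t z] _ /=.
    have := tuple_lastI [tuple of rcons t z]; rewrite /= => /eqP.
    rewrite eqseq_rcons => /andP[/eqP e1 /eqP e2].
    by congr pair; [apply: val_inj; rewrite /= -e1|rewrite -e2].
  by move=> u _; apply: val_inj; rewrite /= -tuple_lastI.
rewrite -(pair_big_dep xpredT (fun (t : k.-tuple T) (z : T) => path lt bot (rcons (rcons t z) x) &&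
         (map rk (rcons t z) == rcons r a)) (fun _ _ => 1%N)) /=.
under eq_bigr => t _ do rewrite big_mkcond /=.
rewrite exchange_big /= [RHS]big_mkcond /=; apply: eq_bigr => z _.
rewrite -sum1_card [in RHS]big_mkcond /=.
case: ifP => hz.
  apply: eq_bigr => t _; rewrite rcons_path last_rcons map_rcons eqseq_rcons.
  by case/andP: hz => -> ->; rewrite !andbT.
rewrite big1 // => t _; rewrite rcons_path last_rcons map_rcons eqseq_rcons.
by move: hz; case: (lt z x); case: (rk z == a); rewrite //= !andbF.
Qed.
End Cnt.

Section Split.
Variable n : nat.
Definition ismax (S : {set 'I_n}) (j : 'I_n) :=
  (j \in S) && (S \subset [set i : 'I_n | (i <= j)%N]).

Lemma ismax_uniq S j1 j2 : ismax S j1 -> ismax S j2 -> j1 = j2.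
Proof.
case/andP=> h1 /subsetP s1 /andP[h2 /subsetP s2]; apply: val_inj.
have := s1 _ h2; have := s2 _ h1; rewrite !inE => a b.
by apply/eqP; rewrite eqn_leq a b.
Qed.

Lemma ismax_ex S : S != set0 -> {j | ismax S j}.
Proof.
move=> hS.
have hc : (0 < #|S|)%N by rewrite card_gt0.
have [i0 hi0 hmax] := eq_bigmax_cond (fun i : 'I_n => val i) hc.
exists i0; rewrite /ismax hi0; apply/subsetP => i hi; rewrite inE -hmax.
exact: (leq_bigmax_cond i hi).
Qed.

Lemma sum_nonempty (F : {set 'I_n} -> {poly int}) :
  \sum_(S : {set 'I_n} | S != set0) F S =
  \sum_(j < n) \sum_(S : {set 'I_n} | S \subset [set i : 'I_n | (i < j)%N]) F (j |: S).
Proof.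
have step : forall j : 'I_n, \sum_(S : {set 'I_n} | ismax S j) F S =
   \sum_(S : {set 'I_n} | S \subset [set i : 'I_n | (i < j)%N]) F (j |: S).
  move=> j; rewrite (reindex_onto (fun S : {set 'I_n} => j |: S) (fun S : {set 'I_n} => S :\ j)); last first.
    by move=> S /andP[hj _]; rewrite setD1K.
  apply: eq_bigl => S; apply/idP/idP.
    case/andP=> /andP[_ /subsetP hs] /eqP <-; apply/subsetP => i.
    rewrite !inE => /andP[hij hi].
    have := hs i; rewrite !inE => /(_ hi) hle.
    by rewrite ltn_neqAle hle andbT -val_eqE in hij *.
  move/subsetP => hs.
  have hjS : j \notin S by apply/negP => /hs; rewrite inE ltnn.
  rewrite /ismax setU11 /=; apply/andP; split.
    apply/subsetP => i; rewrite !inE => /orP[/eqP -> //|/hs].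
    by rewrite inE => /ltnW.
  apply/eqP/setP => i; rewrite !inE; case: (eqVneq i j) => [->|] //=.
  by rewrite (negPf hjS).
under [RHS]eq_bigr => j _ do rewrite -step.
under [RHS]eq_bigr => j _ do rewrite big_mkcond /=.
rewrite exchange_big /= [LHS]big_mkcond /=; apply: eq_bigr => S _.
case: (eqVneq S set0) => [->|hS] /=.
  rewrite big1 // => j _; case: ifP => //; case/andP; by rewrite inE.
have [j hj] := ismax_ex hS.
rewrite -big_mkcond /= (big_pred1 j) // => k /=.
apply/idP/idP => [hk|/eqP ->//]; by rewrite (ismax_uniq hk hj).
Qed.
End Split.

Section Flag.
Variables (T : finType) (lt : rel T) (rk : T -> nat) (bot : T) (n : nat).
Hypothesis ltrk : forall a b, lt a b -> (rk a < rk b)%N.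

Lemma flag0 x : flag_number lt rk bot x (set0 : {set 'I_n}) = lt bot x.
Proof.
rewrite /flag_number cards0.
case hx: (lt bot x).
  apply: (@eq_card1 _ [tuple]) => t; rewrite [t]tuple0 !inE /= hx.
  by apply/eqP; rewrite enum_set0.
by apply: eq_card0 => t; rewrite [t]tuple0 !inE /= hx.
Qed.

Lemma path_rk b t x : path lt b (rcons t x) ->
  (rk b < rk x)%N /\ (forall y, y \in t -> (rk y < rk x)%N).
Proof.
elim: t b => [|y t IH] b /=; first by move/andP=> [/ltrk h _].
case/andP=> hby /IH [h1 h2]; split; first exact: ltn_trans (ltrk hby) h1.
by move=> z; rewrite inE => /orP[/eqP ->|/h2].
Qed.

Lemma flag_support x (S : {set 'I_n}) :
  flag_number lt rk bot x S != 0%N -> S \subset [set i : 'I_n | (i.+1 < rk x)%N].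
Proof.
apply: contraR => /subsetPn [i hi]; rewrite inE => hni.
apply/eqP/eq_card0 => t; rewrite !inE; apply/negP => /andP[/path_rk [_ h] /eqP hm].
have : (val i).+1 \in [seq rk y | y <- val t].
  by rewrite hm; apply/mapP; exists i => //; rewrite mem_enum.
by case/mapP => y /h hy hyi; rewrite hyi hy in hni.
Qed.

Lemma enum_sorted (A : {set 'I_n}) : sorted ltn (map val (enum A)).
Proof.
rewrite -[enum _](eq_filter (mem_enum _)).
rewrite -(eq_filter (mem_map val_inj _)) -filter_map.
by rewrite (sorted_filter ltn_trans) // unlock val_ord_enum iota_ltn_sorted.
Qed.

Lemma enum_add (j : 'I_n) (S : {set 'I_n}) :
  S \subset [set i : 'I_n | (i < j)%N] ->
  map val (enum (j |: S)) = rcons (map val (enum S)) (val j).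
Proof.
move=> /subsetP hs.
apply: (irr_sorted_eq ltn_trans ltnn); first exact: enum_sorted.
  rewrite (sorted_pairwise ltn_trans) -cats1 pairwise_cat /= andbT.
  rewrite -(sorted_pairwise ltn_trans) enum_sorted andbT.
  apply/allrelP => a b /mapP[i hi ->]; rewrite inE => /eqP ->.
  by have := hs i; rewrite mem_enum in hi; rewrite inE => /(_ hi).
move=> y; apply/mapP/idP.
  case=> i; rewrite mem_enum !inE => /orP[/eqP ->|hi] ->;
    rewrite mem_rcons inE ?eqxx //; apply/orP; right; apply/mapP; exists i => //.
  by rewrite mem_enum.
rewrite mem_rcons inE => /orP[/eqP ->|/mapP[i hi ->]].
  by exists j => //; rewrite mem_enum setU11.
by exists i => //; rewrite mem_enum !inE -(mem_enum S) hi orbT.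
Qed.

Lemma flag_add x (j : 'I_n) (S : {set 'I_n}) :
  S \subset [set i : 'I_n | (i < j)%N] ->
  flag_number lt rk bot x (j |: S) =
  (\sum_(z | lt z x && (rk z == j.+1)) flag_number lt rk bot z S)%N.
Proof.
move=> hs.
have hj : j \notin S by apply/negP => /(subsetP hs); rewrite inE ltnn.
have hc : #|j |: S| = #|S|.+1 by rewrite cardsU1 hj.
have em : [seq (val i).+1 | i <- enum (j |: S)] = rcons [seq (val i).+1 | i <- enum S] j.+1.
  have h := congr1 (map succn) (enum_add hs); rewrite map_rcons in h. rewrite (map_comp succn val) [in RHS](map_comp succn val). exact: h.
change (cnt lt rk bot #|j |: S| x [seq (val i).+1 | i <- enum (j |: S)] =
  (\sum_(z | lt z x && (rk z == j.+1)) cnt lt rk bot #|S| z [seq (val i).+1 | i <- enum S])%N).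
by rewrite hc em cnt_rcons.
Qed.

Lemma prod_split x (j : 'I_n) (S : {set 'I_n}) :
  S \subset [set i : 'I_n | (i < j)%N] -> (j.+1 < rk x)%N ->
  \prod_(i < n | (i.+1 < rk x)%N) cS (j |: S) i =
  'X^(j.+1) * \prod_(i < n | (j.+1 <= i)%N && (i.+1 < rk x)%N) (1 - 'X^(i.+1))
    * \prod_(i < n | (i.+1 < j.+1)%N) cS S i.
Proof.
move=> /subsetP hs hjx.
rewrite (bigD1 j) //= {1}/cS setU11 -mulrA; congr (_ * _).
rewrite (bigID (fun i : 'I_n => (i < j)%N)) /= mulrC; congr (_ * _).
  apply: eq_big => i.
    rewrite -leqNgt; case: (eqVneq i j) => [->|hij] /=; first by rewrite ltnn !andbF.
    rewrite andbT; case: (i.+1 < rk x)%N; rewrite ?andbF //= andbT.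
    by rewrite (ltn_neqAle j) eq_sym val_eqE hij.
  case/andP=> /andP[_ hij] hle; rewrite /cS !inE (negPf hij).
  case: ifP => // /hs; rewrite inE => hlt.
  by rewrite hlt in hle.
apply: eq_big => i.
  rewrite ltnS; case: (ltnP i j) => hij; rewrite ?andbF //=.
  rewrite andbT; apply/andP; split; [exact: leq_ltn_trans hij (ltnW hjx)|by rewrite -val_eqE /= neq_ltn hij].
case/andP=> _ hij; rewrite /cS !inE.
by have -> : (i == j) = false by apply/negP => /eqP e; rewrite e ltnn in hij.
Qed.

Lemma sum_by_rank (P : pred T) (G : T -> {poly int}) :
  \sum_(j < n) \sum_(z | P z && (rk z == j.+1)) G z =
  \sum_(z | P z && (0 < rk z <= n)%N) G z.
Proof.
under eq_bigr => j _ do rewrite big_mkcond /=.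
rewrite exchange_big /= [RHS]big_mkcond /=; apply: eq_bigr => z _.
case hP: (P z) => /=; last by rewrite big1.
case: (posnP (rk z)) => [hz|hz] /=.
  by rewrite big1 // => j _; rewrite hz.
case: (leqP (rk z) n) => hzn /=; last first.
  rewrite big1 // => j _; case: eqP => // e.
  by move: (ltn_ord j) hzn; rewrite e; lia.
have hj : ((rk z).-1 < n)%N by rewrite prednK.
rewrite -big_mkcond /= (big_pred1 (Ordinal hj)) // => j /=.
by rewrite -val_eqE /=; apply/eqP/eqP => [->|->]; rewrite ?prednK.
Qed.

Definition Cw x : {poly int} := \sum_(S : {set 'I_n})
  (flag_number lt rk bot x S)%:R * \prod_(i < n | (i.+1 < rk x)%N) cS S i.

Lemma Cw_rec x :
  Cw x = (lt bot x)%:R * \prod_(i < n | (i.+1 < rk x)%N) (1 - 'X^(i.+1))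
   + \sum_(z | lt z x && (0 < rk z <= n)%N)
       ('X^(rk z) * \prod_(i < n | (rk z <= i)%N && (i.+1 < rk x)%N) (1 - 'X^(i.+1)))
       * Cw z.
Proof.
rewrite /Cw (bigD1 set0) //= flag0; congr (_ * _ + _).
  by apply: eq_bigr => i _; rewrite /cS inE.
rewrite sum_nonempty.
under [LHS]eq_bigr => j _.
  under eq_bigr => S hS do rewrite (flag_add _ hS) natr_sum mulr_suml.
  rewrite exchange_big /=.
  under eq_bigr => z /andP[hzx /eqP hz].
    have hjx : (j.+1 < rk x)%N by rewrite -hz; apply: ltrk.
    under eq_bigr => S hS do rewrite (prod_split hS hjx) -hz mulrCA.
    rewrite -mulr_sumr.
    over.
  over.
rewrite -sum_by_rank; apply: eq_bigr => j _; apply: eq_bigr => z /andP[_ /eqP hz].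
congr (_ * _); rewrite [RHS](bigID (fun S : {set 'I_n} => S \subset [set i : 'I_n | (i < j)%N])) /=.
rewrite [X in _ = _ + X]big1 ?addr0 // => S hS.
case: (eqVneq (flag_number lt rk bot z S) 0%N) => [-> | /flag_support hsup]; first by rewrite mul0r.
exfalso; move/negP: hS; apply; apply/subsetP => i /(subsetP hsup).
by rewrite !inE hz ltnS.
Qed.

End Flag.

Definition pr (a b : nat) : {poly int} := \prod_(a <= i < b) (1 - 'X^(i.+1)).

Lemma pr_cat a b c : (a <= b <= c)%N -> pr a c = pr a b * pr b c.
Proof. by case/andP=> h1 h2; rewrite /pr (@big_cat_nat _ _ _ b) . Qed.

Lemma sum_subsets (U : finType) (A : {set U}) (g : nat -> {poly int}) :
  \sum_(Z : {set U} | Z \subset A) g #|Z| = \sum_(k < #|A|.+1) g k *+ 'C(#|A|, k).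
Proof.
transitivity (\sum_(Z : {set U} | Z \subset A) \sum_(k < #|A|.+1 | #|Z| == k) g k).
  apply: eq_bigr => Z hZ.
  have hk : (#|Z| < #|A|.+1)%N by rewrite ltnS subset_leq_card.
  by rewrite (big_pred1 (Ordinal hk)) // => k; rewrite /= -val_eqE eq_sym.
rewrite (exchange_big_dep xpredT) //= ; apply: eq_bigr => k _.
rewrite sumr_const; congr (_ *+ _).
rewrite -cards_draws; apply: eq_card => Z; rewrite !inE eq_sym.
by rewrite unfold_in /= eq_sym.
Qed.

Lemma subset_binom (U : finType) (A : {set U}) :
  \sum_(Z : {set U} | Z \subset A) 'X^#|Z| * (1 - 'X) ^+ (#|A| - #|Z|) = 1 :> {poly int}.
Proof.
rewrite (@sum_subsets _ A (fun k => 'X^k * (1 - 'X) ^+ (#|A| - k))).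
transitivity ((1 - 'X + 'X : {poly int}) ^+ #|A|); last by rewrite subrK expr1n.
rewrite exprDn; apply: eq_bigr => k _; by rewrite mulrC.
Qed.

Lemma boolean_lemma (U : finType) (good : pred {set U}) (Cf : {set U} -> {poly int}) (N : nat) :
  (forall X Z : {set U}, good X -> Z \subset X -> good Z) ->
  (forall X : {set U}, good X -> (0 < #|X| <= N.+1)%N ->
     Cf X = pr 0 (#|X|.-1) + \sum_(Z : {set U} | [&& good Z, Z \proper X & Z != set0])
                 ('X^#|Z| * pr #|Z| (#|X|.-1)) * Cf Z) ->
  forall X : {set U}, good X -> (0 < #|X| <= N.+1)%N -> (1 - 'X) ^+ #|X| * Cf X = pr 0 #|X|.
Proof.
move=> hd hrec X; have [k hk] := ubnP #|X|; elim: k X hk => // k IH X hk hg hX.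
set m := #|X|.
have hm : (0 < m)%N by case/andP: hX.
rewrite (hrec X hg hX) mulrDr mulr_sumr.
transitivity (pr 0 m.-1 * ((1 - 'X) ^+ m +
   \sum_(Z : {set U} | [&& good Z, Z \proper X & Z != set0]) 'X^#|Z| * (1 - 'X) ^+ (m - #|Z|))).
  rewrite mulrDr mulrC; congr (_ + _); rewrite mulr_sumr; apply: eq_bigr => Z /and3P[hgZ hpZ hnZ].
  have hZm : (#|Z| < m)%N by apply: proper_card.
  have hZ : (0 < #|Z| <= N.+1)%N.
    rewrite card_gt0 hnZ /=; apply: leq_trans (ltnW hZm) _; by case/andP: hX.
  have IHZ := IH Z (leq_trans hZm (ltnSE hk)) hgZ hZ.
  rewrite (@pr_cat 0 #|Z| m.-1); last by apply/andP; split => //; lia.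
  have -> : (1 - 'X : {poly int}) ^+ m = (1 - 'X) ^+ (m - #|Z|) * (1 - 'X) ^+ #|Z|.
    by rewrite -exprD subnK // ltnW.
  rewrite -IHZ; ring.
transitivity (pr 0 m.-1 * (1 - 'X^m)); last first.
  by rewrite /pr -{3}(prednK hm) big_nat_recr //= prednK.
congr (_ * _).
have hs := subset_binom X.
rewrite (bigD1 set0) ?sub0set //= (bigD1 X) ?subxx //= in hs; last first.
  by rewrite -card_gt0.
rewrite cards0 subn0 expr0 mul1r subnn expr0 mulr1 in hs.
transitivity ((1 - 'X : {poly int}) ^+ #|X| + ('X^#|X| +
    \sum_(i : {set U} | (i \subset X) && (i != set0) && (i != X))
       'X^#|i| * (1 - 'X) ^+ (#|X| - #|i|)) - 'X^m); last by rewrite hs.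
rewrite addrCA [RHS]addrAC subrr add0r; congr (_ + _).
apply: eq_bigl => Z; rewrite properEneq.
case hZ: (Z \subset X); rewrite ?andbF ?andbT //=.
  by rewrite (hd X Z hg hZ) /= andbC.
Qed.

Lemma qint_mul k : (1 - 'X) * qint k = 1 - 'X^k.
Proof.
rewrite /qint -opprB -[RHS]opprB subrX1 mulNr; congr (- _).
Qed.

Lemma qfact_pr m : (1 - 'X) ^+ m * qfact m = pr 0 m.
Proof.
have -> : (1 - 'X : {poly int}) ^+ m = \prod_(1 <= k < m.+1) (1 - 'X : {poly int}).
  by rewrite prodr_const_nat subn1.
rewrite /qfact /pr -big_split /=.
rewrite big_add1 /=; apply: eq_bigr => i _; exact: qint_mul.
Qed.

Lemma oneX_neq0 : (1 - 'X : {poly int}) != 0.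
Proof.
apply/eqP => h; have := congr1 (fun p : {poly int} => p`_1) h.
by rewrite coefB coef1 coefX coef0.
Qed.

Lemma prod_conv n a b (F : nat -> {poly int}) : (b <= n.+1)%N ->
  \prod_(i < n | (a <= i)%N && (i.+1 < b)%N) F i = \prod_(a <= i < b.-1) F i.
Proof.
move=> hb; have hb' : (b.-1 <= n)%N by lia.
rewrite big_geq_mkord (big_ord_widen_cond _ _ _ hb'); apply: eq_bigl => i /=.
by congr (_ && _); lia.
Qed.

Lemma prod_conv0 n b (F : nat -> {poly int}) : (b <= n.+1)%N ->
  \prod_(i < n | (i.+1 < b)%N) F i = \prod_(0 <= i < b.-1) F i.
Proof. by move=> hb; rewrite -(@prod_conv n) //; apply: eq_bigl => i. Qed.

Lemma Theta_top (T : finType) (lt : rel T) (rk : T -> nat) (bot top : T) n :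
  rk top = n.+1 ->
  Theta (abindex lt rk bot top n) = Cw lt rk bot n top.
Proof.
move=> ht; rewrite ThetaE /Cw; apply: eq_bigr => S _; congr (_ * _).
by apply: eq_bigl => i; rewrite ht ltnS ltn_ord.
Qed.

Lemma simplex_main n : Theta (Psi_simplex n) = qfact n.+1.
Proof.
have ltrk : forall a b, (@simplex_lt n) a b -> ((@simplex_rank n) a < (@simplex_rank n) b)%N.
  by move=> a b; apply: proper_card.
set C := Cw (@simplex_lt n) ((@simplex_rank n)) set0 n.
have hB := @boolean_lemma _ predT C n (fun _ _ _ _ => isT).
have key : (1 - 'X) ^+ #|[set: 'I_n.+1]| * C setT = pr 0 #|[set: 'I_n.+1]|.
  apply: hB => //; last by rewrite cardsT card_ord /= leqnn.
  move=> X _ hX; rewrite /C Cw_rec //.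
  congr (_ + _).
    rewrite /simplex_lt proper0 -card_gt0 (andP hX).1 mul1r.
    by rewrite /simplex_rank (@prod_conv0 n _ (fun i => 1 - 'X^(i.+1))) //; case/andP: hX.
  apply: eq_big => Z.
    rewrite /simplex_lt /simplex_rank /=.
    case hZ: (Z \proper X) => //=.
    have := proper_card hZ; case/andP: hX => _ h1 h2.
    have -> : (#|Z| <= n)%N by rewrite -ltnS (leq_trans h2 h1).
    by rewrite andbT card_gt0.
  move=> /andP[hZ _]; rewrite /simplex_rank; congr (_ * _ * _).
  rewrite (@prod_conv n _ _ (fun i => 1 - 'X^(i.+1))) //; by case/andP: hX.
rewrite /Psi_simplex (Theta_top _ _ _ (n := n)); last by rewrite /simplex_rank cardsT card_ord.
rewrite cardsT card_ord -qfact_pr in key.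
apply: (mulfI (expf_neq0 _ oneX_neq0)); exact: key.
Qed.

Section Cross.
Variable n : nat.
Local Notation U := ('I_n * bool)%type.

Lemma valid_card (A : {set U}) : cross_valid A -> (#|A| <= n)%N.
Proof.
move=> /forallP hv.
have inj : {in A &, injective (fun p : U => p.1)}.
  move=> [i b] [j c] hA hB /= eij; subst j.
  case: (eqVneq b c) => [->//|hbc]; exfalso; have := hv i.
  by case: b c hbc hA hB => [] [] //= _ hA hB; rewrite ?hA ?hB.
rewrite -(card_in_imset inj); apply: leq_trans (max_card _) _; by rewrite card_ord.
Qed.

Lemma valid_sub (A B : {set U}) : cross_valid A -> B \subset A -> cross_valid B.
Proof.
move=> /forallP hv /subsetP hs; apply/forallP => i; apply/negP => /andP[h1 h2].
by have := hv i; rewrite (hs _ h1) (hs _ h2).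
Qed.

Lemma cross_ltrk (a b : cross_face n) : cross_lt a b -> (cross_rank a < cross_rank b)%N.
Proof.
case: a => [A|] //; case: b => [B|] /=; first exact: proper_card.
by move=> _; rewrite ltnS; apply: valid_card (valP A).
Qed.

Lemma sum_face (P : pred (cross_face n)) (F : cross_face n -> {poly int}) :
  P None = false ->
  \sum_(z | P z) F z =
  \sum_(Z : {set U} | P (insub Z) && cross_valid Z) F (insub Z).
Proof.
move=> hN; rewrite (reindex_omap (fun Z : {set U} => insub Z : cross_face n)
                     (fun z : cross_face n => omap val z)) /=.
  apply: eq_bigl => Z; congr (_ && _).
  case: insubP => [B hB <-|hB] /=; last by rewrite (negbTE hB).
  by rewrite eqxx; symmetry; exact: (valP B).
move=> [B|] hP /=; [by rewrite valK | by rewrite hN in hP].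
Qed.

Definition hset (f : {ffun 'I_n -> option bool}) : {set U} :=
  [set p : U | f p.1 == Some p.2].

Definition wt (o : option bool) : {poly int} := if o is Some _ then 'X else 1 - 'X.

Lemma card_hset f : #|hset f| = #|[set i | f i != None]|.
Proof.
rewrite -!sum1_card big_mkcond [RHS]big_mkcond /=.
rewrite (eq_bigr (fun p : U => if (p.1, p.2) \in hset f then 1%N else 0%N)); last by case.
rewrite -(pair_bigA _ (fun i b => if (i, b) \in hset f then 1%N else 0%N)) /=.
apply: eq_bigr => i _; rewrite big_bool !inE /=; by case: (f i) => [[]|].
Qed.

Lemma valid_sum :
  \sum_(Z : {set U} | cross_valid Z) 'X^#|Z| * (1 - 'X) ^+ (n - #|Z|) = (1 + 'X : {poly int}) ^+ n.
Proof.
have -> : (1 + 'X : {poly int}) ^+ n = \prod_(i < n) \sum_(o : option bool) wt o.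
  rewrite -[n in LHS]card_ord -prodr_const; apply: eq_bigr => i _.
  rewrite (bigD1 None) //= (bigD1 (Some true)) //= (bigD1 (Some false)) //= big1.
    by rewrite addr0 addrA subrK.
  by case=> [[]|].
rewrite bigA_distr_bigA /=.
rewrite (reindex hset) /=; last first.
  exists (fun Z : {set U} => [ffun i => if (i, true) \in Z then Some true
                       else if (i, false) \in Z then Some false else None]).
    move=> f _; apply/ffunP => i; rewrite ffunE !inE /=; by case: (f i) => [[]|].
  move=> Z /forallP hv; apply/setP => [[i b]]; rewrite !inE ffunE /=.
  have := hv i; case: b; case: ((i, true) \in Z); case: ((i, false) \in Z) => //.
rewrite big_mkcond /=; apply: eq_bigr => f _.
have -> : cross_valid (hset f).
  by apply/forallP => i; rewrite !inE /=; case: (f i) => [[]|].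
rewrite card_hset (bigID (fun i => f i != None)) /=.
rewrite (eq_bigr (fun _ => 'X)); last by move=> i; case: (f i).
rewrite [X in _ = _ * X](eq_bigr (fun _ => 1 - 'X)); last by move=> i; case: (f i).
rewrite !prodr_const; congr (_ ^+ _ * _ ^+ _).
  by apply: eq_card => i; rewrite inE.
transitivity #|~: [set i | f i != None]|; last by apply: eq_card => i; rewrite !inE.
by rewrite cardsCs setCK card_ord.
Qed.

End Cross.

Lemma cross_main n : Theta (Psi_cross n) = qint 2 ^+ n * qfact n.
Proof.
set C := Cw (@cross_lt n) (@cross_rank n) (cross_bot n) n.
have ltrk := @cross_ltrk n.
have hB := @boolean_lemma _ (@cross_valid n) (fun Z => C (insub Z)) n
   (fun X Z hX hZ => valid_sub hX hZ).
have key : forall X : {set 'I_n * bool}, cross_valid X -> (0 < #|X| <= n.+1)%N ->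
    (1 - 'X) ^+ #|X| * C (insub X) = pr 0 #|X|.
  apply: hB => X hX hXc /=.
  rewrite (insubT (@cross_valid n) hX) /C Cw_rec //.
  congr (_ + _).
    rewrite /= proper0 -card_gt0 (andP hXc).1 mul1r.
    by rewrite (@prod_conv0 n _ (fun i => 1 - 'X^(i.+1))) //; case/andP: hXc.
  rewrite sum_face //; apply: eq_big => Z.
    case hv: (cross_valid Z); last by rewrite andbF.
    rewrite (insubT (@cross_valid n) hv) /= card_gt0 andbT.
    case hp: (Z \proper X) => //=.
    by rewrite (valid_card hv) andbT.
  move=> /andP[_ hv]; rewrite (insubT (@cross_valid n) hv) /=; congr (_ * _ * _).
  by rewrite (@prod_conv n _ _ (fun i => 1 - 'X^(i.+1))) //; case/andP: hXc.
have qint2 : qint 2 = 1 + 'X.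
  by rewrite /qint big_ord_recr big_ord1 /= expr0 expr1.
rewrite /Psi_cross (Theta_top _ _ _ (n := n)) //.
apply: (mulfI (expf_neq0 n oneX_neq0)).
rewrite mulrCA qfact_pr qint2 -valid_sum.
rewrite Cw_rec //= mul1r (@prod_conv0 n _ (fun i => 1 - 'X^(i.+1))) //= sum_face //.
rewrite mulrDr mulr_sumr.
rewrite [in RHS](bigD1 set0) /=; last exact: cross_valid0.
rewrite cards0 subn0 expr0 mul1r mulrDl; congr (_ + _).
rewrite mulr_suml; apply: eq_big => Z.
  case hv: (cross_valid Z); last by rewrite andbF.
  rewrite (insubT (@cross_valid n) hv) /= card_gt0 andbT (valid_card hv) andbT.
  by [].
move=> /andP[/and3P[_ hpos _] hv].
have kZ := key Z hv.
rewrite (insubT (@cross_valid n) hv) /= in hpos kZ *.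
have hZn := valid_card hv.
have {}kZ := kZ (introT andP (conj hpos (leqW hZn))).
rewrite (@prod_conv n _ _ (fun i => 1 - 'X^(i.+1))) //=.
have -> : (1 - 'X : {poly int}) ^+ n = (1 - 'X) ^+ (n - #|Z|) * (1 - 'X) ^+ #|Z|.
  by rewrite -exprD subnK.
rewrite (@pr_cat 0 #|Z| n) ?hZn // -kZ /C /pr; ring.
Qed.


Unset Implicit Arguments.

Theorem mainTheorem2 (n : nat) (hn : (1 <= n)%N) :
  Theta (Psi_simplex n) = qfact n.+1 /\
  Theta (Psi_cross n) = qint 2 ^+ n * qfact n.
Proof.
split; [exact: simplex_main | exact: cross_main].
Qed.
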